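(* Let $n\ge 2$ and let $u\in C^4$ be a $2$-convex solution of $\sigma_2(D^2u)=1$ on an open set in $\mathbb{R}^n$. At any point where $D^2u$ is diagonal with $u_{11}\ge u_{22}\ge\cdots\ge u_{nn}$, one has $$-\sum_{i\neq j}u_{ii1}u_{jj1}\ \ge\ \frac{2(n-1)\,u_{111}^2}{(n-1)u_{11}^2+2(n-2)}.$$
   Context: Subscripts denote partial derivatives, e.g. $u_{ij1}=\partial^3u/\partial x_i\partial x_j\partial x_1$. $\sigma_2(D^2u)$ is the second elementary symmetric function of the eigenvalues of $D^2u$. A function is $2$-convex if the eigenvalues $\lambda$ of its Hessian satisfy $\sigma_1(\lambda)>0$, $\sigma_2(\lambda)>0$ everywhere. *)

(* Defs.v *)
From mathcomp Require Import all_boot.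
From Stdlib Require Import Reals.
Set Implicit Arguments. Unset Strict Implicit. Unset Printing Implicit Defensive.

Open Scope R_scope.

Definition pt (n : nat) := 'I_n -> R.

Definition upd (n : nat) (x : pt n) (i : 'I_n) (t : R) : pt n :=
  fun j => if j == i then t else x j.

Definition near (n : nat) (x y : pt n) (d : R) : Prop :=
  forall j : 'I_n, Rabs (y j - x j) < d.

Definition is_open (n : nat) (U : pt n -> Prop) : Prop :=
  forall x, U x -> exists d, 0 < d /\ forall y, near x y d -> U y.

Definition cont_on (n : nat) (f : pt n -> R) (U : pt n -> Prop) : Prop :=
  forall x, U x -> forall eps, 0 < eps ->
    exists d, 0 < d /\ forall y, U y -> near x y d -> Rabs (f y - f x) < eps.

Definition is_partial (n : nat) (f : pt n -> R) (i : 'I_n) (g : pt n -> R)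
  (U : pt n -> Prop) : Prop :=
  forall x, U x -> derivable_pt_lim (fun t => f (upd x i t)) (x i) (g x).

Fixpoint Ck (n : nat) (k : nat) (f : pt n -> R) (U : pt n -> Prop) : Prop :=
  cont_on f U /\
  match k with
  | O => True
  | S k' => forall i : 'I_n, exists g, is_partial f i g U /\ Ck k' g U
  end.

(* sigma_1 and sigma_2 of the eigenvalues of a square matrix A, written as
   the trace and the sum of principal 2x2 minors respectively. *)
Definition sigma1 (n : nat) (A : 'I_n -> 'I_n -> R) : R :=
  \big[Rplus/0]_(i < n) A i i.

Definition sigma2 (n : nat) (A : 'I_n -> 'I_n -> R) : R :=
  \big[Rplus/0]_(i < n) \big[Rplus/0]_(j < n | ltn i j)
     (A i i * A j j - A i j * A j i).

(* Main.v *)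
From HB Require Import structures.
Require Import Defs.
From mathcomp Require Import all_boot.
From Stdlib Require Import Reals Lra FunctionalExtensionality.
Open Scope R_scope.

HB.instance Definition _ := Monoid.isComLaw.Build R 0 Rplus (fun a b c => esym (Rplus_assoc a b c)) Rplus_comm Rplus_0_l.

Section S.
Variable n : nat.

Lemma sumZ (c : R) (F : 'I_n -> R) (P : pred 'I_n) :
  \big[Rplus/0]_(i < n | P i) (c * F i) = c * \big[Rplus/0]_(i < n | P i) F i.
Proof. elim/big_rec2: _ => [|i y1 y2 _ ->]; ring. Qed.

Lemma sumD (F G : 'I_n -> R) :
  \big[Rplus/0]_(i < n) (F i + G i) = \big[Rplus/0]_(i < n) F i + \big[Rplus/0]_(i < n) G i.
Proof. by rewrite big_split. Qed.

Lemma sumC (c : R) : \big[Rplus/0]_(i < n) c = INR n * c.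
Proof.
rewrite big_const_ord; elim: n => [|m IH]; first by rewrite /=; ring.
by rewrite iterS IH S_INR; ring.
Qed.

Lemma sumdelta (i1 : 'I_n) (F : 'I_n -> R) :
  \big[Rplus/0]_(i < n) ((if i == i1 then 1 else 0) * F i) = F i1.
Proof.
rewrite (bigD1 i1) //= eqxx big1; first ring.
by move=> i /negbTE ->; ring.
Qed.

Lemma offdiag (a b : 'I_n -> R) :
  \big[Rplus/0]_(i < n) \big[Rplus/0]_(j < n | i != j) (a i * b j) =
  (\big[Rplus/0]_(i < n) a i) * (\big[Rplus/0]_(i < n) b i)
   - \big[Rplus/0]_(i < n) (a i * b i).
Proof.
have E : forall i, \big[Rplus/0]_(j < n | i != j) (a i * b j) =
   a i * (\big[Rplus/0]_(j < n) b j) + (-1) * (a i * b i).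
  move=> i; rewrite -sumZ.
  rewrite [in RHS](bigD1 i) //=.
  rewrite [LHS](eq_bigl (fun j => j != i)); first by
    match goal with |- ?L = ?x + ?S + ?y => change L with S end; ring.
  by move=> j; rewrite eq_sym.
rewrite (eq_bigr _ (fun i _ => E i)) sumD sumZ.
rewrite (eq_bigr (fun i => a i * \big[Rplus/0]_(j < n) b j)) //.
rewrite (eq_bigr (fun i => (\big[Rplus/0]_(j < n) b j) * a i)); last by move=> i _; ring.
rewrite sumZ; ring.
Qed.

Lemma pairsym (F : 'I_n -> 'I_n -> R) :
  \big[Rplus/0]_(i < n) \big[Rplus/0]_(j < n | ltn i j) (F i j + F j i) =
  \big[Rplus/0]_(i < n) \big[Rplus/0]_(j < n | i != j) F i j.
Proof.
rewrite (eq_bigr (fun i : 'I_n => \big[Rplus/0]_(j < n | ltn i j) F i j +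
                          \big[Rplus/0]_(j < n | ltn i j) F j i));
  last by move=> i _; rewrite big_split.
rewrite big_split /=.
have -> : \big[Rplus/0]_(i < n) \big[Rplus/0]_(j < n | ltn i j) F j i =
          \big[Rplus/0]_(i < n) \big[Rplus/0]_(j < n | ltn j i) F i j.
  rewrite (eq_bigr (fun i : 'I_n => \big[Rplus/0]_(j < n) (if ltn i j then F j i else 0)));
    last by move=> i _; rewrite big_mkcond.
  rewrite exchange_big /=.
  by apply: eq_bigr => i _; rewrite [RHS]big_mkcond.
rewrite -big_split /=.
apply: eq_bigr => i _.
rewrite (bigID (fun j : 'I_n => ltn i j) (fun j : 'I_n => i != j)) /=.
congr (_ + _); apply: eq_bigl => j; rewrite -(inj_eq val_inj) /=;
  by case: ltngtP.
Qed.
End S.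

Lemma deriv_big (I : Type) (r : seq I) (P : pred I) (F : I -> R -> R) (F' : I -> R) t0 :
  (forall i, derivable_pt_lim (F i) t0 (F' i)) ->
  derivable_pt_lim (fun t => \big[Rplus/0]_(i <- r | P i) F i t) t0
                   (\big[Rplus/0]_(i <- r | P i) F' i).
Proof.
move=> H; elim: r => [|a r IH].
  have -> : (fun t => \big[Rplus/0]_(i <- [::] | P i) F i t) = fun _ => 0.
    by apply: functional_extensionality => t; rewrite big_nil.
  rewrite big_nil; exact: derivable_pt_lim_const.
have -> : (fun t => \big[Rplus/0]_(i <- a :: r | P i) F i t) =
   fun t => (if P a then F a t else 0) + \big[Rplus/0]_(i <- r | P i) F i t.
  apply: functional_extensionality => t; rewrite big_cons; case: (P a) => //; ring.
rewrite big_cons.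
have -> : (if P a then F' a + \big[Rplus/0]_(i <- r | P i) F' i
           else \big[Rplus/0]_(i <- r | P i) F' i) =
          (if P a then F' a else 0) + \big[Rplus/0]_(i <- r | P i) F' i.
  by case: (P a) => //; ring.
apply: (derivable_pt_lim_plus (fun t => if P a then F a t else 0)) => //.
case: (P a) => //; exact: derivable_pt_lim_const.
Qed.

Lemma my_mult f1 f2 x l1 l2 : derivable_pt_lim f1 x l1 -> derivable_pt_lim f2 x l2 ->
  derivable_pt_lim (fun t => f1 t * f2 t) x (l1 * f2 x + f1 x * l2).
Proof. exact: derivable_pt_lim_mult. Qed.

Lemma my_minus f1 f2 x l1 l2 : derivable_pt_lim f1 x l1 -> derivable_pt_lim f2 x l2 ->
  derivable_pt_lim (fun t => f1 t - f2 t) x (l1 - l2).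
Proof. exact: derivable_pt_lim_minus. Qed.

Lemma deriv_locconst f x0 l d : derivable_pt_lim f x0 l -> 0 < d ->
  (forall t, Rabs (t - x0) < d -> f t = 1) -> l = 0.
Proof.
move=> H hd Hc.
destruct (Req_dec l 0) as [|hl]; first by [].
have hl' : 0 < Rabs l / 2 by move: (Rabs_pos_lt _ hl); lra.
have [del Hdel] := H _ hl'.
pose h := Rmin del d / 2.
have hm : 0 < Rmin del d by apply: Rmin_pos => //; apply: cond_pos.
have hh : h <> 0 by rewrite /h; lra.
have hh2 : Rabs h < del.
  rewrite /h Rabs_right; last lra. have := Rmin_l del d; lra.
have := Hdel h hh hh2.
rewrite (Hc (x0 + h)); last first.
  have -> : x0 + h - x0 = h by ring.
  rewrite /h Rabs_right; last lra. have := Rmin_r del d; lra.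
rewrite (Hc x0); last by rewrite Rminus_diag Rabs_R0.
have -> : (1 - 1) / h - l = - l by field.
rewrite Rabs_Ropp; lra.
Qed.
Lemma ident (A E s f1 l1 N b : R) (hs : s <> 0) (hN : N - 1 <> 0)
  (hb : b * ((N-1)*l1^2 + 2*(N-2)) = 2*(N-1)*f1) :
  let p := b/(N-1) in let q := - b * l1 / 2 in let r := - b in
  let Ge := E + N*p + q*s + r in
  A + N * p ^ 2 + (q - Ge / s) ^ 2 * (s * s - 2) + r ^ 2 + 2 * p * E + 2 * (q - Ge / s) * (E * s) +
   2 * r * f1 + 2 * p * (q - Ge / s) * s + 2 * p * r + 2 * (q - Ge / s) * r * l1
   = A - E*E - b * f1 - 2 * (Ge/s)^2.
Proof.
move=> p q r Ge; rewrite /Ge /p /q /r.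
have -> : f1 = b * ((N-1)*l1^2 + 2*(N-2)) / (2*(N-1)) by rewrite hb; field.
field; auto.
Qed.

Lemma final (A E L P s f1 l1 N : R) (hs: 0<s) (hL : E*s - L = 0) (hP : s*s - P = 2) (hN: 2 <= N)
 (HS : forall p k r, 0 <= A + N*p^2 + k^2*P + r^2 + 2*p*E + 2*k*L + 2*r*f1 + 2*p*k*s + 2*p*r + 2*k*r*l1) :
 -(E*E - A) >= 2*(N-1)*f1^2/((N-1)*l1^2 + 2*(N-2)).
Proof.
have EL : L = E*s by lra.
have EP : P = s*s - 2 by lra.
subst L P.
have hD : 0 <= (N-1)*l1^2 + 2*(N-2) by nra.
destruct (Req_dec ((N-1)*l1^2 + 2*(N-2)) 0) as [h0|hpos].
  rewrite h0 Rdiv_0_r.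
  have := HS 0 (- E / s) 0.
  have -> : A + N * 0 ^ 2 + (- E / s) ^ 2 * (s * s - 2) + 0 ^ 2 + 2 * 0 * E + 2 * (- E / s) * (E * s) +
   2 * 0 * f1 + 2 * 0 * (- E / s) * s + 2 * 0 * 0 + 2 * (- E / s) * 0 * l1
   = A - E*E - 2 * (E/s)^2 by field; lra.
  move=> H; have : 0 <= 2 * (E/s)^2 by nra. lra.
have hDp : 0 < (N-1)*l1^2 + 2*(N-2) by lra.
pose b := 2*(N-1)*f1/((N-1)*l1^2 + 2*(N-2)).
have hb : b * ((N-1)*l1^2 + 2*(N-2)) = 2*(N-1)*f1 by rewrite /b; field; lra.
have := HS (b/(N-1)) ((- b * l1 / 2) - (E + N*(b/(N-1)) + (- b * l1 / 2)*s + (- b))/s) (- b).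
rewrite (ident A E s f1 l1 N b); try lra.
have -> : 2 * (N - 1) * f1 ^ 2 / ((N-1)*l1^2 + 2*(N-2)) = b * f1 by rewrite /b; field; lra.
set G := (E + N * (b / (N - 1)) + - b * l1 / 2 * s + - b).
move=> H; have : 0 <= 2 * (G/s)^2 by nra. lra.
Qed.

Lemma sum_nonneg (n : nat) (F : 'I_n -> R) : (forall i, 0 <= F i) -> 0 <= \big[Rplus/0]_(i < n) F i.
Proof. move=> H; elim/big_rec: _ => [|i y _ hy]; [lra | have := H i; lra]. Qed.

Lemma upd_same (n : nat) (x : pt n) (i : 'I_n) : upd x i (x i) = x.
Proof. apply: functional_extensionality => j; rewrite /upd; by case: eqP => [->|]. Qed.

Theorem corollary2p1 (n : nat) (hn : leq 2 n)
  (U : pt n -> Prop) (hU : is_open U)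
  (u : pt n -> R)
  (D1 : 'I_n -> pt n -> R)
  (D2 : 'I_n -> 'I_n -> pt n -> R)
  (D3 : 'I_n -> 'I_n -> 'I_n -> pt n -> R)
  (hC4 : Ck 4 u U)
  (hD1 : forall i, is_partial u i (D1 i) U)
  (hD2 : forall i j, is_partial (D1 i) j (D2 i j) U)
  (hD3 : forall i j k, is_partial (D2 i j) k (D3 i j k) U)
  (h2conv : forall y, U y -> 0 < sigma1 (fun i j => D2 i j y) /\
                             0 < sigma2 (fun i j => D2 i j y))
  (heq : forall y, U y -> sigma2 (fun i j => D2 i j y) = 1)
  (x : pt n) (hx : U x)
  (hdiag : forall i j : 'I_n, i <> j -> D2 i j x = 0)
  (hord : forall i j : 'I_n, leq i j -> D2 j j x <= D2 i i x)
  (i1 : 'I_n) (hi1 : nat_of_ord i1 = 0%nat) :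
  - (\big[Rplus/0]_(i < n) \big[Rplus/0]_(j < n | i != j)
        (D3 i i i1 x * D3 j j i1 x))
  >= 2 * (INR n - 1) * (D3 i1 i1 i1 x) ^ 2
     / ((INR n - 1) * (D2 i1 i1 x) ^ 2 + 2 * (INR n - 2)).
Proof.
pose g := fun t => sigma2 (fun i j => D2 i j (upd x i1 t)).
have Hder : derivable_pt_lim g (x i1)
  (\big[Rplus/0]_(i < n) \big[Rplus/0]_(j < n | ltn i j)
     (D3 i i i1 x * D2 j j (upd x i1 (x i1)) + D2 i i (upd x i1 (x i1)) * D3 j j i1 x
      - (D3 i j i1 x * D2 j i (upd x i1 (x i1)) + D2 i j (upd x i1 (x i1)) * D3 j i i1 x))).
  rewrite /g /sigma2.
  apply (@deriv_big _ _ _ (fun (i : 'I_n) (t : R) => \big[Rplus/0]_(j < n | ltn i j)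
     (D2 i i (upd x i1 t) * D2 j j (upd x i1 t) - D2 i j (upd x i1 t) * D2 j i (upd x i1 t)))); move=> i.
  apply (@deriv_big _ _ _ (fun (j : 'I_n) (t : R) =>
     (D2 i i (upd x i1 t) * D2 j j (upd x i1 t) - D2 i j (upd x i1 t) * D2 j i (upd x i1 t)))); move=> j.
  apply: my_minus; apply: my_mult; by apply: hD3.
rewrite upd_same in Hder.
have [d [hd Hnear]] := hU x hx.
have H0 := deriv_locconst _ _ _ _ Hder hd.
have {}H0 : \big[Rplus/0]_(i < n) \big[Rplus/0]_(j < n | ltn i j)
     (D3 i i i1 x * D2 j j x + D2 i i x * D3 j j i1 x
      - (D3 i j i1 x * D2 j i x + D2 i j x * D3 j i i1 x)) = 0.
  apply: H0 => t ht; rewrite /g; apply: heq; apply: Hnear => j.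
  rewrite /upd; case: eqP => [->|_]; first by [].
  by rewrite Rminus_diag Rabs_R0.
have H1 : \big[Rplus/0]_(i < n) \big[Rplus/0]_(j < n | ltn i j)
     (D3 i i i1 x * D2 j j x + D3 j j i1 x * D2 i i x) = 0.
  rewrite -[X in _ = X]H0; apply: eq_bigr => i _; apply: eq_bigr => j hij.
  have hne : i <> j by move=> e; move: hij; rewrite e /ltn /= ltnn.
  rewrite (hdiag _ _ hne) (hdiag j i); [ring | by move=> e; apply: hne].
have P1 := @pairsym n (fun i j => D3 i i i1 x * D2 j j x).
have O1 := @offdiag n (fun i => D3 i i i1 x) (fun j => D2 j j x).
cbv beta in P1, O1.
rewrite P1 O1 in H1.
have H2 : \big[Rplus/0]_(i < n) \big[Rplus/0]_(j < n | ltn i j)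
     (D2 i i x * D2 j j x + D2 j j x * D2 i i x) = 2.
  have := heq x hx; rewrite /sigma2 => Hh.
  rewrite -[2]Rmult_1_r -Hh -sumZ; apply: eq_bigr => i _; rewrite -sumZ.
  apply: eq_bigr => j hij.
  have hne : i <> j by move=> e; move: hij; rewrite e /ltn /= ltnn.
  rewrite (hdiag _ _ hne); ring.
have P2 := @pairsym n (fun i j => D2 i i x * D2 j j x).
have O2 := @offdiag n (fun i => D2 i i x) (fun j => D2 j j x).
cbv beta in P2, O2.
rewrite P2 O2 in H2.
have O3 := @offdiag n (fun i => D3 i i i1 x) (fun j => D3 j j i1 x).
cbv beta in O3.
rewrite O3.
apply: (final _ _ (\big[Rplus/0]_(i < n) (D3 i i i1 x * D2 i i x))
              (\big[Rplus/0]_(i < n) (D2 i i x * D2 i i x))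
              (\big[Rplus/0]_(i < n) D2 i i x)) => //.
- exact: (proj1 (h2conv x hx)).
- have := le_INR 2 n (elimT leP hn); rewrite /=; lra.
move=> p k r.
have Hpt : forall i : 'I_n, (D3 i i i1 x + p + k * D2 i i x + r * (if i == i1 then 1 else 0))^2
  = 1 * (D3 i i i1 x * D3 i i i1 x) + (p^2 * 1 + (k^2 * (D2 i i x * D2 i i x) +
    (2*p * D3 i i i1 x + (2*k * (D3 i i i1 x * D2 i i x) + (2*p*k * D2 i i x +
    (if i == i1 then 1 else 0) * (r^2 + 2*r * D3 i i i1 x + 2*p*r + 2*k*r* D2 i i x)))))).
  by move=> i; case: (i == i1); ring.
have := @sum_nonneg n (fun i : 'I_n => (D3 i i i1 x + p + k * D2 i i x + r * (if i == i1 then 1 else 0))^2)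
   (fun i => pow2_ge_0 _).
rewrite (eq_bigr _ (fun i _ => Hpt i)) !sumD !sumZ sumC sumdelta.
rewrite /= in hi1 *.
move=> H; nra.
Qed.
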